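(* Let $y_1,\dots,y_n$ be invariant coordinates on $V$ with Jacobian $J$. For every multi-index $I=(i_1,\dots,i_s)$ with $s\ge1$, the $V$-valued rational map $J^{2s-1}\,\partial_I v$ on $V$ is a polynomial (regular) map $V\to V$.
   Context: $V$ is an $n$-dimensional complex vector space with basis $e_1,\dots,e_n$ and corresponding coordinates $u_1,\dots,u_n$; $G\subset GL(V)$ is a finite group and $\sigma_1,\dots,\sigma_m$ a fixed minimal system of homogeneous generators of $\mathbb C[V]^G$. A system of invariant coordinates is a choice $y_1=\sigma_{j_1},\dots,y_n=\sigma_{j_n}$ of $n$ of these generators whose Jacobian $J=\det(\partial y_i/\partial u_a)$ is not identically zero. Let $(c_{ai})$ be the inverse matrix of $(\partial y_i/\partial u_a)$ (entries in the field $\mathbb C(V)$) and let $D_i=\sum_a c_{ai}\,\partial/\partial u_a$ be the corresponding commuting derivations of $\mathbb C(V)$ (the coordinate vector fields $\partial/\partial y_i$). Let $v=\sum_a u_a e_a$ denote the identity map of $V$. For a multi-index $I=(i_1,\dots,i_s)$ with $i_k\in\{1,\dots,n\}$, $\partial_I v:=\sum_a D_{i_1}\cdots D_{i_s}(u_a)\,e_a$, a $V$-valued rational map on $V$ (the partial derivative of the identity map in the coordinates $y$); $\partial_\emptyset v=v$. *)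

(* Defs.v *)
From HB Require Import structures.
From mathcomp Require Import all_boot all_order all_algebra.
From mathcomp Require Import generic_quotient fraction.
From mathcomp Require Import mpoly.
From mathcomp Require Import complex.
From mathcomp Require Import reals.

Set Implicit Arguments.
Unset Strict Implicit.
Unset Printing Implicit Defensive.

Import GRing.Theory.
Local Open Scope ring_scope.
Local Open Scope quotient_scope.

Notation tofrac := (@FracField.tofrac _).
Notation "x %:F" := (@FracField.tofrac _ x) : ring_scope.

Section InvCoord.
Variables (R : realType) (n : nat).

(* the complex numbers R[i]; polynomial functions C[V] on V = C^n *)
Local Notation C := (R[i]).
Local Notation P := {mpoly C[n]}.
Local Notation K := {fraction P}.

(* linear substitution: (act g f)(u) = f(g u) *)
Definition act (g : 'M[C]_n) (f : P) : P :=
  f \mPo [tuple \sum_(b < n) (g a b)%:MP * 'X_b | a < n].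

Definition is_fin_subgroup (G : seq 'M[C]_n) : Prop :=
  [/\ (1%:M \in G), (forall g, g \in G -> g \in unitmx)
    & (forall g h, g \in G -> h \in G -> g *m h \in G)].

Definition invariant (G : seq 'M[C]_n) (f : P) : Prop :=
  forall g, g \in G -> act g f = f.

Definition homogeneous (f : P) : Prop := exists d : nat, f \is ishomog1 d mdeg.

Definition generates (G : seq 'M[C]_n) (m : nat) (sigma : m.-tuple P) : Prop :=
  forall f, invariant G f -> exists Q : {mpoly C[m]}, f = Q \mPo sigma.

(* sigma is a minimal system of homogeneous generators of C[V]^G:
   homogeneous invariants generating C[V]^G, no proper subfamily of which
   generates C[V]^G (the subfamily indexed by S is encoded by replacing
   the generators outside S by 0). *)
Definition minimal_hom_generators (G : seq 'M[C]_n) (m : nat)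
    (sigma : m.-tuple P) : Prop :=
  [/\ (forall j, homogeneous (tnth sigma j)),
      (forall j, invariant G (tnth sigma j)),
      generates G sigma
    & (forall S : {set 'I_m},
         generates G [tuple if j \in S then tnth sigma j else 0 | j < m] ->
         S = setT)].

Definition jacmx (y : 'I_n -> P) : 'M[P]_n := \matrix_(i, a) mderiv a (y i).
Definition jacobian (y : 'I_n -> P) : P := \det (jacmx y).

Definition fderiv (a : 'I_n) (x : K) : K :=
  let r := repr x in
  ((mderiv a (\n_r) * \d_r - \n_r * mderiv a (\d_r))%:F / (\d_r ^+ 2)%:F).

Definition cmx (y : 'I_n -> P) : 'M[K]_n := invmx (map_mx tofrac (jacmx y)).

(* D_i = sum_a c_{ai} d/du_a  (= d/dy_i) *)
Definition Dy (y : 'I_n -> P) (i : 'I_n) (x : K) : K :=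
  \sum_(a < n) cmx y a i * fderiv a x.

Definition Dmulti (y : 'I_n -> P) (I : seq 'I_n) (x : K) : K :=
  foldr (Dy y) x I.

(* a-th component of the V-valued rational map d_I v *)
Definition dIv (y : 'I_n -> P) (I : seq 'I_n) (a : 'I_n) : K :=
  Dmulti y I ('X_a)%:F.

End InvCoord.

(* Main.v *)
Require Import Defs.
From HB Require Import structures.
From mathcomp Require Import all_boot all_order all_algebra.
From mathcomp Require Import generic_quotient fraction.
From mathcomp Require Import mpoly.
From mathcomp Require Import complex.
From mathcomp Require Import reals.
From mathcomp Require Import ring zify.
Import GRing.Theory.
Local Open Scope ring_scope.
Local Open Scope quotient_scope.


Lemma genA (T : comRingType) (N D p q dN dD dp dq : T) :
  N * q = p * D -> dN * q + N * dq = dp * D + p * dD ->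
  (dN * D - N * dD) * q ^+ 2 = (dp * q - p * dq) * D ^+ 2.
Proof.
move=> E E'; apply/eqP; rewrite -subr_eq0; apply/eqP.
have -> : (dN * D - N * dD) * q ^+ 2 - (dp * q - p * dq) * D ^+ 2 =
  - (q * D * ((dp * D + p * dD) - (dN * q + N * dq))
     + D * dq * (N * q - p * D) + q * dD * (N * q - p * D)) by ring.
by rewrite E E' !subrr !(mulr0, addr0) oppr0.
Qed.

Lemma genX (T : comRingType) (c c2 J Jk dJ : T) : c2 = c + 1 ->
  dJ * (J * Jk) + J * (c * Jk * dJ) = c2 * (J * Jk) * dJ.
Proof. by move=> ->; ring. Qed.

Lemma genE (F : fieldType) (p q d : F) : q != 0 -> p / q * d * q = p * d.
Proof. by move=> q0; field. Qed.

Lemma genB (F : fieldType) (Jv Jk A dp p c dJ : F) : Jv != 0 -> Jk != 0 ->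
  Jv^-1 * (A * ((dp * (Jv * Jk) - p * (c * Jk * dJ)) / (Jv * Jk * (Jv * Jk)))) =
  A * (dp * Jv - c * p * dJ) / (Jv * (Jv * (Jv * Jk))).
Proof. by move=> J0 K0; field; rewrite J0 K0. Qed.

Lemma repr_frac (R : idomainType) (x : {fraction R}) :
  x * (\d_(repr x))%:F = (\n_(repr x))%:F.
Proof.
rewrite -[x in x * _]reprK.
set r := repr x.
unlock FracField.tofrac.
rewrite -[LHS]FracField.pi_mul.
apply/eqmodP => /=.
rewrite FracField.equivfE /FracField.mulf /=.
rewrite !numden_Ratio ?oner_neq0 ?mulf_neq0 ?oner_neq0 //.
- by rewrite mulr1 mulr1 mulrC.
- exact: denom_ratioP.
- exact: denom_ratioP.
Qed.

Section Work.
Variables (R : realType) (n : nat).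
Local Notation C := (R[i]).
Local Notation P := {mpoly C[n]}.
Local Notation K := {fraction P}.

Lemma tofrac_sum (F : 'I_n -> P) :
  (\sum_a F a)%:F = \sum_a (F a)%:F :> K.
Proof. exact: rmorph_sum. Qed.

Lemma fderivE (a : 'I_n) (p q : P) : q != 0 ->
  fderiv a (p%:F / q%:F) = (mderiv a p * q - p * mderiv a q)%:F / (q ^+ 2)%:F.
Proof.
move=> q0; rewrite /fderiv.
set x := p%:F / q%:F.
have hr := @repr_frac _ x.
move: hr; set r := repr x => hr.
have d0 : \d_r != 0 := denom_ratioP r.
have qF0 : q%:F != 0 :> K by rewrite tofrac_eq0.
have E : \n_r * q = p * \d_r.
  apply/eqP; rewrite -tofrac_eq !tofracM -hr /x.
  by rewrite mulrAC divfK.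
have E' := congr1 (mderiv a) E; rewrite !mderivM in E'.
apply/eqP; rewrite eqr_div ?tofrac_eq0 ?expf_neq0 //.
apply/eqP; rewrite -[LHS]tofracM -[RHS]tofracM; congr (FracField.tofrac _).
apply: (@genA _); [exact E | exact E'].
Qed.

Lemma fderivP (a : 'I_n) (p : P) : fderiv a p%:F = (mderiv a p)%:F.
Proof.
have -> : p%:F = p%:F / (1 : P)%:F :> K by rewrite tofrac1 divr1.
rewrite fderivE ?oner_neq0 //.
by rewrite -mpolyC1 mderivC mpolyC1 !mulr1 mulr0 subr0 expr1n tofrac1 divr1.
Qed.

Lemma mderivXn (a : 'I_n) (J : P) k :
  mderiv a (J ^+ k.+1) = k.+1%:R * J ^+ k * mderiv a J.
Proof.
elim: k => [|k IH]; first by rewrite expr1 expr0 mulr1 mul1r.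
rewrite exprS mderivM IH [J ^+ k.+1]exprS.
apply: (@genX _); by rewrite mulrSr.
Qed.

Variable y : 'I_n -> P.
Local Notation J := (jacobian y).
Hypothesis J0 : J != 0.

Lemma JF0 : J%:F != 0 :> K.
Proof. by rewrite tofrac_eq0. Qed.

Lemma cmxE a i : cmx y a i = (J%:F)^-1 * ((\adj (jacmx y)) a i)%:F.
Proof.
rewrite /cmx /invmx unitmxE det_map_mx unitfE JF0 /=.
by rewrite -map_mx_adj !mxE; reflexivity.
Qed.

Lemma DyE i x : Dy y i x =
  (J%:F)^-1 * \sum_a ((\adj (jacmx y)) a i)%:F * fderiv a x.
Proof.
rewrite /Dy mulr_sumr; apply: eq_bigr => a _.
rewrite cmxE; exact: (esym (mulrA _ _ _)).
Qed.

Lemma Dy_poly i (p : P) : exists q : P, Dy y i p%:F = q%:F / J%:F.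
Proof.
exists (\sum_a (\adj (jacmx y)) a i * mderiv a p).
rewrite DyE mulrC tofrac_sum; congr (_ * _).
by apply: eq_bigr => a _; rewrite fderivP -tofracM; reflexivity.
Qed.

Lemma Dy_step i (p : P) k : exists q : P,
  Dy y i (p%:F / J%:F ^+ k.+1) = q%:F / J%:F ^+ k.+3.
Proof.
exists (\sum_a (\adj (jacmx y)) a i *
          (mderiv a p * J - k.+1%:R * p * mderiv a J)).
have JkF0 : J%:F ^+ k != 0 :> K by rewrite expf_neq0 // JF0.
rewrite DyE tofrac_sum mulr_sumr mulr_suml; apply: eq_bigr => a _.
rewrite -tofracXn fderivE ?expf_neq0 //.
rewrite mderivXn.
rewrite !(tofracM, tofracB, tofracXn, rmorph_nat) !exprS.
apply: (@genB _); [exact: JF0 | exact: JkF0].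
Qed.

End Work.

Theorem lemma3p1 (R : realType) (n : nat) (G : seq 'M[R[i]]_n)
  (m : nat) (sigma : m.-tuple {mpoly R[i][n]}) (jj : 'I_n -> 'I_m) :
  is_fin_subgroup G ->
  minimal_hom_generators G sigma ->
  injective jj ->
  let y := fun i => tnth sigma (jj i) in
  jacobian y != 0 ->
  forall I : seq 'I_n, (0 < size I)%N ->
  forall a : 'I_n, exists p : {mpoly R[i][n]},
    (jacobian y)%:F ^+ (2 * size I - 1) * dIv y I a = p%:F.
Proof.
move=> _ _ _ y J0 I sI a.
have main : forall I : seq 'I_n, (0 < size I)%N ->
    exists p : {mpoly R[i][n]},
    Dmulti y I ('X_a)%:F = p%:F / (jacobian y)%:F ^+ (2 * size I - 1).
  elim => [//|i0 I' IH] _.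
  case: I' IH => [|j I'] IH.
    have [q hq] := @Dy_poly _ _ y J0 i0 ('X_a).
    by exists q; rewrite /= hq expr1.
  have [p hp] := IH isT.
  have [q hq] := @Dy_step _ _ y J0 i0 p (2 * size I').
  exists q.
  have -> : Dmulti y [:: i0, j & I'] ('X_a)%:F = Dy y i0 (Dmulti y (j :: I') ('X_a)%:F) by [].
  have e1 : (2 * size (j :: I') - 1)%N = (2 * size I').+1 by rewrite /=; lia.
  have e2 : (2 * size [:: i0, j & I'] - 1)%N = (2 * size I').+3 by rewrite /=; lia.
  by rewrite hp e1 hq e2.
have [p hp] := main I sI.
exists p; rewrite /dIv hp mulrC divfK // expf_neq0 // tofrac_eq0; exact: J0.
Qed.
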